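(* Let $\vec{\mathcal U}_1,\vec{\mathcal U}_2,\vec{\mathcal V}_1,\vec{\mathcal V}_2\in\Upsilon$. If $\preceq_{\vec{\mathcal U}_1}=\preceq_{\vec{\mathcal U}_2}$ and $\preceq_{\vec{\mathcal V}_1}=\preceq_{\vec{\mathcal V}_2}$, then $\preceq_{\vec{\mathcal U}_1*\vec{\mathcal V}_1}=\preceq_{\vec{\mathcal U}_2*\vec{\mathcal V}_2}$.
   Context: $L$ is a propositional language built from a finite set of propositional variables with the connectives $\neg,\wedge,\vee,\rightarrow,\top,\bot$; $W$ is the finite set of propositional worlds. For $\theta\in L$, $S_\theta=\{w\in W\mid w\models\theta\}$. Sequences: finite sequences $\vec{\mathcal U}=(\mathcal U_0,\ldots,\mathcal U_k)$ ($k\ge0$) of mutually disjoint subsets of $W$ (components may be empty, possibly repeatedly). $\mathrm{rank}^{\vec{\mathcal U}}(\theta)$ is the least $i$ with $\mathcal U_i\cap S_\theta\neq\emptyset$, and $\infty$ if none (with $i<\infty$ for every integer $i$). $\theta\mid\!\sim_{\vec{\mathcal U}}\phi$ iff either $\mathrm{rank}^{\vec{\mathcal U}}(\theta)<\mathrm{rank}^{\vec{\mathcal U}}(\theta\wedge\neg\phi)$ or $\mathrm{rank}^{\vec{\mathcal U}}(\theta)=\infty$. $\vec{\mathcal U}$ is full iff $\bigcup_i\mathcal U_i=W$, empty iff $\bigcup_i\mathcal U_i=\emptyset$; $\Upsilon$ is the set of such sequences which are full or empty. For $\vec{\mathcal U}\in\Upsilon$, $\theta\preceq_{\vec{\mathcal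 U}}\phi$ iff (not $\neg\theta\vee\neg\phi\mid\!\sim_{\vec{\mathcal U}}\theta$) or $\neg\phi\mid\!\sim_{\vec{\mathcal U}}\bot$. Sequence revision $*:\Upsilon\times\Upsilon\to\Upsilon$: for $\vec{\mathcal U}=(\mathcal U_0,\ldots,\mathcal U_k)$ and $\vec{\mathcal V}=(\mathcal V_0,\ldots,\mathcal V_m)$, if $\vec{\mathcal U}$ is full then $\vec{\mathcal U}*\vec{\mathcal V}=(\mathcal U_0\cap\mathcal V_0,\ldots,\mathcal U_k\cap\mathcal V_0,\ \mathcal U_0\cap\mathcal V_1,\ldots,\mathcal U_k\cap\mathcal V_1,\ \ldots,\ \mathcal U_0\cap\mathcal V_m,\ldots,\mathcal U_k\cap\mathcal V_m)$; otherwise $\vec{\mathcal U}*\vec{\mathcal V}=\vec{\mathcal V}$. *)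

(* Defs.v *)
From mathcomp Require Import all_boot.
Set Implicit Arguments. Unset Strict Implicit. Unset Printing Implicit Defensive.

Inductive form (P : Type) : Type :=
| FVar of P
| FNeg of form P
| FAnd of form P & form P
| FOr of form P & form P
| FImp of form P & form P
| FTop
| FBot.
Arguments FTop {P}. Arguments FBot {P}.

Definition world (P : finType) := {ffun P -> bool}.

Fixpoint sat (P : finType) (w : world P) (f : form P) : bool :=
  match f with
  | FVar p => w p
  | FNeg g => ~~ sat w g
  | FAnd g h => sat w g && sat w h
  | FOr g h => sat w g || sat w h
  | FImp g h => sat w g ==> sat w h
  | FTop => true
  | FBot => false
  end.

Definition models (P : finType) (f : form P) : {set world P} := [set w | sat w f].

Definition is_sequence (P : finType) (U : seq {set world P}) : bool :=
  (0 < size U) && pairwise (fun A B : {set world P} => [disjoint A & B]) U.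

Definition full (P : finType) (U : seq {set world P}) : bool :=
  \bigcup_(A <- U) A == [set: world P].
Definition emptyseq (P : finType) (U : seq {set world P}) : bool :=
  \bigcup_(A <- U) A == set0.

Definition in_Upsilon (P : finType) (U : seq {set world P}) : bool :=
  is_sequence U && (full U || emptyseq U).

(* rank: None stands for infinity *)
Definition rank (P : finType) (U : seq {set world P}) (f : form P) : option nat :=
  let i := find (fun A => A :&: models f != set0) U in
  if i < size U then Some i else None.

Definition rank_lt (a b : option nat) : bool :=
  match a, b with
  | Some i, Some j => i < j
  | Some _, None => true
  | None, _ => false
  end.

Definition entails (P : finType) (U : seq {set world P}) (t f : form P) : bool :=
  rank_lt (rank U t) (rank U (FAnd t (FNeg f))) || (rank U t == None).

Definition pref (P : finType) (U : seq {set world P}) (t f : form P) : bool :=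
  ~~ entails U (FOr (FNeg t) (FNeg f)) t || entails U (FNeg f) FBot.

Definition revise (P : finType) (U V : seq {set world P}) : seq {set world P} :=
  if full U then flatten [seq [seq A :&: B | A <- U] | B <- V] else V.

(* Main.v *)
Require Import Defs.
From mathcomp Require Import all_boot.
From mathcomp Require Import zify.

Section S.
Variable P : finType.
Implicit Types (U V : seq {set world P}) (a b : form P) (w : world P).

Definition idx U w : option nat :=
  let i := find (fun A : {set world P} => w \in A) U in if i < size U then Some i else None.
Definition lt U w w' := rank_lt (idx U w) (idx U w').
Definition nn U w := idx U w != None.
Definition ole x y := ~~ rank_lt y x.

Lemma idxE U w : idx U w = if has (fun A : {set world P} => w \in A) U then Some (find (fun A : {set world P} => w \in A) U) else None.
Proof. by rewrite /idx has_find. Qed.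

Lemma rank_spec U a : (forall w, w \in models a -> ole (rank U a) (idx U w)) /\
  (rank U a = None \/ exists2 w, w \in models a & idx U w = rank U a).
Proof.
rewrite /rank; set p := (fun A => _ != set0).
case: ifP => hi.
- have hp : p (nth set0 U (find p U)) by apply: nth_find; rewrite has_find.
  have first : forall w, w \in models a -> ole (Some (find p U)) (idx U w).
    move=> w hw; rewrite /idx; case: ifP => // hj /=.
    apply/negP => /= hlt.
    have := before_find set0 hlt; rewrite /p.
    have hw2 : w \in nth set0 U (find (fun A : {set world P} => w \in A) U) by apply: (@nth_find _ set0 (fun A : {set world P} => w \in A)); rewrite has_find.
    move=> hf; have : (nth set0 U (find (fun A : {set world P} => w \in A) U)) :&: models a != set0 by apply/set0Pn; exists w; rewrite inE hw2 hw.
    by rewrite hf.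
  split=> //; right.
  move: hp; rewrite /p => /set0Pn [w]; rewrite inE => /andP [hwU hwa].
  exists w => //.
  have := first w hwa; rewrite /idx.
  have : find (fun A : {set world P} => w \in A) U <= find p U.
    rewrite leqNgt; apply/negP => hlt; have := before_find set0 hlt; by rewrite hwU.
  case: ifP => hj /= hle; last by move: hj; rewrite (leq_ltn_trans hle hi).
  move=> hn; congr Some; apply/eqP; rewrite eqn_leq; apply/andP; split=> //; by rewrite leqNgt.
- split; last by left.
  move=> w hw; rewrite /idx; case: ifP => //= hj.
  have : has p U.
    apply/hasP; exists (nth set0 U (find (fun A : {set world P} => w \in A) U)); first exact: mem_nth.
    apply/set0Pn; exists w; rewrite inE hw andbT; apply: (@nth_find _ set0 (fun A : {set world P} => w \in A)); by rewrite has_find.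
  by rewrite has_find hi.
Qed.

Lemma rank_lt_char U a b : rank_lt (rank U a) (rank U b) =
  [exists w, [&& (w \in models a), nn U w & [forall w', (w' \in models b) ==> lt U w w']]].
Proof.
have [sa1 sa2] := rank_spec U a; have [sb1 sb2] := rank_spec U b.
apply/idP/idP.
- case: sa2 => [->//|[w hw ew] hlt].
  apply/existsP; exists w; rewrite hw /nn ew /=.
  apply/andP; split; first by move: hlt; case: (rank U a).
  apply/forallP => w'; apply/implyP => hw'.
  have := sb1 w' hw'; rewrite /lt ew /ole.
  move: hlt; case: (rank U a) => [x|] //; case: (rank U b) => [y|] //=;
  case: (idx U w') => [z|] //=; lia.
- move/existsP => [w /and3P [hw hn /forallP hall]].
  have := sa1 w hw; move: hn; rewrite /nn.
  case: sb2 => [->|[w' hw' ew']].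
    by case: (rank U a) => //; case: (idx U w).
  have := implyP (hall w') hw'; rewrite /lt ew'.
  case: (rank U a) => [x|] //; case: (rank U b) => [y|] //=;
  case: (idx U w) => [z|] //=; rewrite /ole /=; lia.
Qed.

Lemma rank_none_char U a : (rank U a == None) = [forall w, (w \in models a) ==> ~~ nn U w].
Proof.
have [sa1 sa2] := rank_spec U a.
apply/eqP/forallP.
- move=> e w; apply/implyP => hw; have := sa1 w hw; rewrite e /nn.
  by case: (idx U w).
- move=> h; case: sa2 => // [[w hw ew]].
  by have := implyP (h w) hw; rewrite /nn ew negbK => /eqP.
Qed.

Lemma pref_congr U U' t f : (forall w, nn U w = nn U' w) ->
  (forall w w', lt U w w' = lt U' w w') -> pref U t f = pref U' t f.
Proof.
move=> hn hl.
have E : forall a b, entails U a b = entails U' a b.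
  move=> a b; rewrite /entails !rank_lt_char !rank_none_char.
  congr (_ || _).
    apply: eq_existsb => w; rewrite hn; congr [&& _, _ & _].
    by apply: eq_forallb => w'; rewrite hl.
  by apply: eq_forallb => w; rewrite hn.
by rewrite /pref !E.
Qed.

Lemma rank_models U a b : models a = models b -> rank U a = rank U b.
Proof. by rewrite /rank => ->. Qed.

Lemma rank_lt_irr x : rank_lt x x = false.
Proof. by case: x => //= n; rewrite ltnn. Qed.

Lemma rank_single U a w : models a = [set w] -> rank U a = idx U w.
Proof.
move=> e; have [s1 s2] := rank_spec U a.
have := s1 w; rewrite e inE eqxx => /(_ isT).
case: s2 => [->|[w0]]; first by case: (idx U w).
by rewrite e inE => /eqP -> ->.
Qed.

Lemma rank_set0 U a : models a = set0 -> rank U a = None.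
Proof. move=> e; have [_ [//|[w]]] := rank_spec U a; by rewrite e inE. Qed.

Lemma rank_notNone U a w : w \in models a -> nn U w -> rank U a != None.
Proof.
move=> hw; have [s1 _] := rank_spec U a; have := s1 w hw; rewrite /nn.
by case: (rank U a); case: (idx U w).
Qed.

Lemma rank_allNone U a : (forall w, ~~ nn U w) -> rank U a = None.
Proof.
move=> h; have [_ [//|[w _]]] := rank_spec U a.
by have := h w; rewrite /nn negbK => /eqP ->.
Qed.

Lemma rank_pair U X w w' : models X = [set w; w'] ->
  rank_lt (rank U X) (idx U w') = lt U w w'.
Proof.
move=> e; have [s1 s2] := rank_spec U X.
have h1 := s1 w; have h2 := s1 w'; rewrite e !inE !eqxx ?orbT in h1 h2.
have {h1}h1 := h1 isT; have {h2}h2 := h2 isT.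
rewrite /lt; case: s2 => [en|[w0]].
  by move: h1; rewrite en; case: (idx U w).
rewrite e !inE => /orP [] /eqP -> er; rewrite -er in h1 h2 * => //.
rewrite rank_lt_irr; move: h1; rewrite /ole; by case: (rank_lt (idx U w) _).
Qed.

Lemma nn_mem U w : nn U w = (w \in \bigcup_(A <- U) A).
Proof.
rewrite /nn idxE; case: ifP => h /=; apply/esym; move: h.
all: elim: U => [|A U IH]; rewrite ?big_nil ?big_cons ?inE //=.
- by case: (w \in A) => //= /IH.
- by case: (w \in A) => //= /IH.
Qed.

Lemma nn_full U w : in_Upsilon U -> nn U w = full U.
Proof.
case/andP => _ /orP [h|h].
- by rewrite h nn_mem (eqP h) inE.
- have e := eqP h; rewrite nn_mem e inE.
  apply/esym/negP => /eqP ef; rewrite e in ef.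
  by have := in_setT w; rewrite -ef inE.
Qed.

Definition chi w : form P :=
  foldr (fun p acc => FAnd (if w p then FVar p else FNeg (FVar p)) acc) FTop (enum P).

Lemma sat_chi v w : sat v (chi w) = (v == w).
Proof.
have -> : sat v (chi w) = all (fun p => v p == w p) (enum P).
  rewrite /chi; elim: (enum P) => //= p s ->; case: (w p) => /=; by case: (v p).
apply/allP/eqP => [H|->]; last by move=> p _.
by apply/ffunP => p; apply/eqP/H; rewrite mem_enum.
Qed.

Lemma lt_pref U w w' : full U ->
  lt U w w' = ~~ pref U (FNeg (chi w')) (FNeg (chi w)).
Proof.
move=> hf.
have nnall : forall v, nn U v by move=> v; rewrite nn_mem (eqP hf) inE.
rewrite /pref /entails.
rewrite (@rank_models U (FAnd (FNeg (FNeg (chi w))) (FNeg FBot)) (FNeg (FNeg (chi w)))); last first.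
  by apply/setP => v; rewrite !inE /= andbT.
rewrite rank_lt_irr /=.
rewrite (@rank_single U (FNeg (FNeg (chi w))) w); last by apply/setP => v; rewrite !inE /= negbK sat_chi.
have -> : (idx U w == None) = false by apply/negbTE/nnall.
rewrite orbF negbK.
set X := FOr _ _.
have eX : models X = [set w; w'].
  by apply/setP => v; rewrite !inE /= !negbK !sat_chi orbC.
rewrite (@rank_single U (FAnd X _) w'); last first.
  by apply/setP => v; rewrite !inE /= !negbK !sat_chi; case: (v == w') => //; rewrite andbF.
rewrite (@rank_pair U X w w' eX).
have -> : (rank U X == None) = false.
  by apply/negbTE/(@rank_notNone U _ w); rewrite ?eX ?inE ?eqxx.
by rewrite orbF.
Qed.

Lemma pref_top_bot U : in_Upsilon U -> pref U FTop FBot = ~~ full U.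
Proof.
move=> hU; case hf: (full U); last first.
  have h : forall v, ~~ nn U v by move=> v; rewrite (nn_full _ _ hU) hf.
  by rewrite /pref /entails !rank_allNone.
have w0 : world P := [ffun _ => true].
rewrite /pref /entails.
rewrite (@rank_models U (FAnd (FNeg FBot) (FNeg FBot)) (FNeg FBot)); last first.
  by apply/setP => v; rewrite !inE.
rewrite rank_lt_irr /=.
have -> : (rank U (FNeg FBot) == None) = false.
  by apply/negbTE/(@rank_notNone U _ w0); rewrite ?inE // (nn_full _ _ hU).
rewrite (@rank_set0 U (FAnd _ _)); last by apply/setP => v; rewrite !inE /= ?andbF.
case e: (rank U _) => //.
have : rank U (FOr (FNeg FTop) (FNeg FBot)) != None.
  by apply/(@rank_notNone U _ w0); rewrite ?inE // (nn_full _ _ hU).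
by rewrite e.
Qed.

Lemma has_flat U V w : has (fun A : {set world P} => w \in A) U ->
  has (fun C : {set world P} => w \in C) (flatten [seq [seq A :&: B | A <- U] | B <- V]) = has (fun B : {set world P} => w \in B) V.
Proof.
move=> hU; elim: V => [|B V IH] //=; rewrite has_cat IH has_map.
case hB: (w \in B).
- have e : preim (fun A => A :&: B) (fun C : {set world P} => w \in C) =1 (fun A : {set world P} => w \in A).
    by move=> A; rewrite /= inE hB andbT.
  by rewrite (eq_has e) hU.
- have e : preim (fun A => A :&: B) (fun C : {set world P} => w \in C) =1 pred0.
    by move=> A; rewrite /= inE hB andbF.
  by rewrite (eq_has e) has_pred0.
Qed.

Lemma find_flat U V w : has (fun A : {set world P} => w \in A) U ->
  find (fun C : {set world P} => w \in C) (flatten [seq [seq A :&: B | A <- U] | B <- V]) =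
  find (fun B : {set world P} => w \in B) V * size U + (if has (fun B : {set world P} => w \in B) V then find (fun A : {set world P} => w \in A) U else 0).
Proof.
move=> hU; elim: V => [|B V IH] //=; rewrite find_cat has_map.
case hB: (w \in B).
- have e : preim (fun A => A :&: B) (fun C : {set world P} => w \in C) =1 (fun A : {set world P} => w \in A).
    by move=> A; rewrite /= inE hB andbT.
  by rewrite (eq_has e) hU find_map (eq_find e).
- have e : preim (fun A => A :&: B) (fun C : {set world P} => w \in C) =1 pred0.
    by move=> A; rewrite /= inE hB andbF.
  by rewrite (eq_has e) has_pred0 size_map IH mulSn addnA.
Qed.

Lemma idx_revise U V w : full U ->
  idx (revise U V) w = if idx V w is Some j then Some (j * size U + odflt 0 (idx U w)) else None.
Proof.
move=> hf.
have hU : has (fun A : {set world P} => w \in A) U.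
  by have := nn_mem U w; rewrite (eqP hf) inE /nn idxE; case: has.
rewrite /revise hf !idxE has_flat // find_flat // hU.
by case: has.
Qed.

Lemma nn_revise U V w : full U -> nn (revise U V) w = nn V w.
Proof. by move=> hf; rewrite /nn idx_revise //; case: idx. Qed.

Lemma idx_lt_size U w i : idx U w = Some i -> i < size U.
Proof. by rewrite /idx; case: ifP => // h [<-]. Qed.

Lemma lex_lt n j j' i i' : i < n -> i' < n ->
  (j * n + i < j' * n + i') = (j < j') || (~~ (j' < j) && (i < i')).
Proof.
move=> hi hi'; case: (ltngtP j j') => h /=.
- apply/idP; nia.
- apply/negbTE; rewrite -leqNgt; nia.
- by subst; rewrite ltn_add2l.
Qed.

Lemma lt_revise U V w w' : full U ->
  lt (revise U V) w w' =
  if nn V w then (if nn V w' then lt V w w' || (~~ lt V w' w && lt U w w') else true) else false.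
Proof.
move=> hf.
have hs : forall v, exists2 i, idx U v = Some i & i < size U.
  move=> v; have := nn_mem U v; rewrite (eqP hf) inE /nn.
  case e: (idx U v) => [i|] // _; exists i => //; exact: idx_lt_size e.
have [i ei hi] := hs w; have [i' ei' hi'] := hs w'.
rewrite /lt /nn !idx_revise // ei ei'.
case: (idx V w) => [j|]; case: (idx V w') => [j'|] //=.
exact: lex_lt.
Qed.

End S.
Arguments idx {P}. Arguments lt {P}. Arguments nn {P}. Arguments chi {P}.

Theorem proposition5 (P : finType) (U1 U2 V1 V2 : seq {set world P}) :
  in_Upsilon U1 -> in_Upsilon U2 -> in_Upsilon V1 -> in_Upsilon V2 ->
  (forall t f : form P, pref U1 t f = pref U2 t f) ->
  (forall t f : form P, pref V1 t f = pref V2 t f) ->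
  forall t f : form P, pref (revise U1 V1) t f = pref (revise U2 V2) t f.
Proof.
move=> hU1 hU2 hV1 hV2 HU HV t f.
have fU : full U1 = full U2.
  by rewrite -[full U1]negbK -[full U2]negbK -!pref_top_bot // HU.
have fV : full V1 = full V2.
  by rewrite -[full V1]negbK -[full V2]negbK -!pref_top_bot // HV.
case hf: (full U1); last by rewrite /revise hf -fU hf; exact: HV.
have hf2 : full U2 by rewrite -fU.
have eqU : forall w w', lt U1 w w' = lt U2 w w'.
  by move=> w w'; rewrite !lt_pref // HU.
apply: pref_congr => [w|w w'].
  by rewrite !nn_revise // !nn_full // fV.
rewrite !lt_revise // !(nn_full _ _ _ hV1) !(nn_full _ _ _ hV2) fV.
case hfv: (full V2) => //.
have eqV : forall w w', lt V1 w w' = lt V2 w w'.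
  by move=> x y; rewrite !lt_pref ?fV // HV.
by rewrite !eqV !eqU.
Qed.
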